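(* Let $n\ge 2$, $1\le n_1\le n-1$, $n_2=n-n_1$, and let $\xi_1,\dots,\xi_n$ be an orthonormal basis of $\mathbb{C}^n$. Let $\Pi_1$ be the orthogonal projection onto $\mathrm{span}\{\xi_1,\dots,\xi_{n_1}\}$ and $\Pi_2$ the orthogonal projection onto $\mathrm{span}\{\xi_{n_1+1},\dots,\xi_n\}$. Let $U$ be an $n\times n$ unitary matrix, $B_1=\Pi_1U$, $B_2=\Pi_2U$, and assume $\{B_1,B_2\}$ is unital, i.e. $B_1B_1^*+B_2B_2^*=I$. Let $0\le p\le 1$, $q=1-p$, and for $k,k'\in\mathbb{R}$ put $\omega_k=e^{ik}$, $B_{1k}=\overline{\omega}_kB_1$, $B_{2k}=\omega_kB_2$, $U_k=B_{1k}+B_{2k}$, and define the linear map $\mathcal{L}_{k,k'}$ on $n\times n$ complex matrices by $$\mathcal{L}_{k,k'}(\rho)=p\left(B_{1k}\rho B_{1k'}^*+B_{2k}\rho B_{2k'}^*\right)+qU_k\rho U_{k'}^*.$$ Let $\gamma_1=\frac{1}{\sqrt n}I$, for $2\le l\le n$ let $\gamma_l=\frac{1}{\sqrt{l(l-1)}}\,\mathrm{diag}(1,\dots,1,-(l-1),0,\dots,0)$ (with $l-1$ entries equal to $1$), and for $k\ne j$ let $\gamma_{k,j}$ be the normalized off-diagonal generalized Gell-Mann matrices (the normalization of $E_{kj}+E_{jk}$ for $k<j$ and of $-i(E_{jk}-E_{kj})$ for $k>j$, where $E_{kj}$ is the matrix unit in the basis $\xi_1,\dots,\xi_n$). Use the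 Hilbert–Schmidt inner product $\langle X,Y\rangle=\mathrm{Tr}(X^*Y)$ and write $\omega_\nu=e^{i\nu}$. Then for all $k,\nu\in\mathbb{R}$: (1) $\langle \gamma_{k,j},\mathcal{L}_{k,k+\nu}(\gamma_1)\rangle=0$ for all $k\ne j$; (2) $\langle\gamma_1,\mathcal{L}_{k,k+\nu}(\gamma_1)\rangle=\frac{2n_2\cos\nu}{n}+\frac{n_1-n_2}{n}\omega_\nu$; $\langle\gamma_l,\mathcal{L}_{k,k+\nu}(\gamma_1)\rangle=0$ for $2\le l\le n_1$; and $\langle\gamma_l,\mathcal{L}_{k,k+\nu}(\gamma_1)\rangle=\frac{2n_1 i\sin\nu}{\sqrt{n(l-1)l}}$ for $n_1+1\le l\le n$; (3) for every element $\gamma$ of this normalized basis, $\langle\gamma_1,\mathcal{L}_{k,k+\nu}(\gamma)\rangle=\omega_\nu\,\delta_{\gamma\gamma_1}-2i\sin\nu\,\frac{1}{\sqrt n}\mathrm{Tr}(B_2\gamma B_2^* )$. In particular, for $\nu=0$, the matrix of $\mathcal{L}_{k,k}$ with respect to this basis (ordered with $\gamma_1$ first) has first row and first column both equal to $(1,0,\dots,0)$.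
   Context: The basis $\{\gamma_1,\dots,\gamma_n\}\cup\{\gamma_{k,j}:k\neq j\}$ is the generalized Gell-Mann basis normalized to be orthonormal for the Hilbert–Schmidt inner product on $n\times n$ complex matrices. The map $\mathcal{L}_{k,k'}$ is the Fourier-transformed one-step superoperator of a partially open quantum random walk on $\mathbb{Z}$ with decoherence parameter $p$ (right moves governed by $B_1$, left moves by $B_2$). *)

(* Defs.v *)
From HB Require Import structures.
From mathcomp Require Import all_boot all_order all_algebra.
From mathcomp Require Import reals trigo.
From mathcomp Require Import complex.
Set Implicit Arguments. Unset Strict Implicit. Unset Printing Implicit Defensive.
Import Order.TTheory GRing.Theory Num.Theory.
Local Open Scope ring_scope.
Local Open Scope complex_scope.

Section Defs.
Variable R : realType.
Local Notation C := R[i].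

Definition adj m n (A : 'M[C]_(m, n)) : 'M[C]_(n, m) := (map_mx Num.conj A)^T.

Definition hs n (X Y : 'M[C]_n) : C := \tr (adj X *m Y).

Definition omega (k : R) : C := (cos k) +i* (sin k).

Variable n : nat.
Variable xi : 'I_n -> 'cV[C]_n.

Definition Eunit (k j : 'I_n) : 'M[C]_n := xi k *m adj (xi j).

(* orthogonal projections onto span{xi_1..xi_n1} and span{xi_(n1+1)..xi_n}
   (0-based: indices i < n1, resp. i >= n1) *)
Definition Proj1 (n1 : nat) : 'M[C]_n := \sum_(i < n | (i < n1)%N) Eunit i i.
Definition Proj2 (n1 : nat) : 'M[C]_n := \sum_(i < n | (n1 <= i)%N) Eunit i i.


(* gamma_l (2 <= l <= n, 1-based l) = diag(1,..,1,-(l-1),0,..,0)/sqrt(l(l-1)) in basis xi *)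
Definition gammad (l : nat) : 'M[C]_n :=
  ((Num.sqrt ((l * (l - 1))%:R : R))^-1)%:C *:
  \sum_(i < n) ((if (i.+1 < l)%N then 1 else if i.+1 == l then - ((l - 1)%:R) else 0) : C)
                 *: Eunit i i.

(* off-diagonal generalized Gell-Mann matrices gamma_{k,j} (k <> j), normalized;
   indices are 0-based ordinals (the order is preserved) *)
Definition gammao (k j : 'I_n) : 'M[C]_n :=
  if (k < j)%N then ((Num.sqrt (2 : R))^-1)%:C *: (Eunit k j + Eunit j k)
  else ((Num.sqrt (2 : R))^-1)%:C *: (- 'i *: (Eunit j k - Eunit k j)).

End Defs.

Definition gamma1 (R : realType) (n : nat) : 'M[R[i]]_n :=
  ((Num.sqrt (n%:R : R))^-1)%:C *: 1%:M.

(* the Fourier-transformed one-step superoperator L_{k,k'} *)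
Definition Lmap (R : realType) n (B1 B2 : 'M[R[i]]_n) (p : R) (k k' : R)
  (rho : 'M[R[i]]_n) : 'M[R[i]]_n :=
  let B1k := (omega k)^* *: B1 in
  let B2k := omega k *: B2 in
  let B1k' := (omega k')^* *: B1 in
  let B2k' := omega k' *: B2 in
  let Uk := B1k + B2k in
  let Uk' := B1k' + B2k' in
  p%:C *: (B1k *m rho *m adj B1k' + B2k *m rho *m adj B2k')
  + (1 - p)%:C *: (Uk *m rho *m adj Uk').

(* Main.v *)
Require Import Defs.
From HB Require Import structures.
From mathcomp Require Import all_boot all_order all_algebra.
From mathcomp Require Import reals trigo.
From mathcomp Require Import complex.
From mathcomp Require Import ring lra zify.
Import Order.TTheory GRing.Theory Num.Theory.
Local Open Scope ring_scope.
Local Open Scope complex_scope.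
Set Implicit Arguments. Unset Strict Implicit.


Section Basics.
Variable R : realType.
Local Notation C := R[i].

Lemma conjE (x : C) : Num.conj x = x^*.
Proof. by case: x. Qed.

Lemma adjE m n (A : 'M[C]_(m, n)) : adj A = (map_mx conjc A)^T.
Proof. by rewrite /adj; congr (_^T); apply: eq_map_mx => x; rewrite conjE. Qed.

Lemma adjM m n p (A : 'M[C]_(m, n)) (B : 'M[C]_(n, p)) : adj (A *m B) = adj B *m adj A.
Proof. by rewrite !adjE map_mxM trmx_mul. Qed.

Lemma adjD m n (A B : 'M[C]_(m, n)) : adj (A + B) = adj A + adj B.
Proof. by rewrite !adjE map_mxD linearD. Qed.

Lemma adjN m n (A : 'M[C]_(m, n)) : adj (- A) = - adj A.
Proof. by rewrite !adjE map_mxN linearN. Qed.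

Lemma adjB m n (A B : 'M[C]_(m, n)) : adj (A - B) = adj A - adj B.
Proof. by rewrite adjD adjN. Qed.

Lemma adjZ m n (c : C) (A : 'M[C]_(m, n)) : adj (c *: A) = c^* *: adj A.
Proof. by rewrite !adjE map_mxZ linearZ. Qed.

Lemma adjK m n (A : 'M[C]_(m, n)) : adj (adj A) = A.
Proof. by apply/matrixP => i j; rewrite !adjE !mxE conjcK. Qed.

Lemma adj_scalar m (c : C) : adj (c%:M : 'M[C]_m) = (c^*)%:M.
Proof. by apply/matrixP => i j; rewrite !adjE !mxE rmorphMn eq_sym. Qed.

Lemma conjc_realE (x : R) : (x%:C)^* = x%:C.
Proof. exact: conjc_real. Qed.

End Basics.

Section Units.
Variable R : realType.
Local Notation C := R[i].
Variable n : nat.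
Variable xi : 'I_n -> 'cV[C]_n.
Hypothesis ortho : forall i j : 'I_n, adj (xi i) *m xi j = (i == j)%:R%:M.
Local Notation E := (Eunit xi).

Lemma EE a b c d : E a b *m E c d = (b == c)%:R *: E a d.
Proof.
rewrite /Eunit mulmxA -(mulmxA (xi a)) ortho mul_mx_scalar -scalemxAl.
by [].
Qed.

Lemma adjEu a b : adj (E a b) = E b a.
Proof. by rewrite /Eunit adjM adjK. Qed.

Lemma trE a b : \tr (E a b) = (a == b)%:R.
Proof.
rewrite /Eunit mxtrace_mulC ortho mxtrace_scalar.
by rewrite eq_sym.
Qed.

Definition D (f : 'I_n -> C) : 'M[C]_n := \sum_(i < n) f i *: E i i.

Lemma ED a b f : E a b *m D f = f b *: E a b.
Proof.
rewrite /D mulmx_sumr (bigD1 b) //= big1 ?addr0.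
  by rewrite -scalemxAr EE eqxx scale1r.
by move=> i /negbTE ib; rewrite -scalemxAr EE eq_sym ib scale0r scaler0.
Qed.

Lemma DD f g : D f *m D g = D (fun i => f i * g i).
Proof.
rewrite {1}/D mulmx_suml; apply: eq_bigr => i _.
by rewrite -scalemxAl ED scalerA.
Qed.

Lemma trD f : \tr (D f) = \sum_(i < n) f i.
Proof.
rewrite /D raddf_sum; apply: eq_bigr => i _.
by rewrite /= mxtraceZ trE eqxx mulr1.
Qed.

Lemma adjDf f : adj (D f) = D (fun i => (f i)^*).
Proof.
rewrite /D; elim/big_rec2: _ => [|i x y _ H].
  by rewrite !adjE map_mx0 trmx0.
by rewrite adjD adjZ adjEu -H.
Qed.

Lemma DZ c f : c *: D f = D (fun i => c * f i).
Proof. by rewrite /D scaler_sumr; apply: eq_bigr => i _; rewrite scalerA. Qed.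

Lemma DplusD f g : D f + D g = D (fun i => f i + g i).
Proof. by rewrite /D -big_split; apply: eq_bigr => i _; rewrite scalerDl. Qed.

Lemma D0 : D (fun _ => 0) = 0.
Proof. by rewrite /D big1 // => i _; rewrite scale0r. Qed.

Lemma trDD f g : \tr (D f *m D g) = \sum_(i < n) f i * g i.
Proof. by rewrite DD trD. Qed.

Lemma tr_offdiag a b f : a != b -> \tr (E a b *m D f) = 0.
Proof. by move=> ab; rewrite ED mxtraceZ trE (negbTE ab) mulr0. Qed.

Lemma Proj1D n1 : Proj1 xi n1 = D (fun i => (i < n1)%N%:R).
Proof.
rewrite /Proj1 /D big_mkcond; apply: eq_bigr => i _.
by case: ifP; rewrite ?scale1r ?scale0r.
Qed.

Lemma Proj2D n1 : Proj2 xi n1 = D (fun i => (n1 <= i)%N%:R).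
Proof.
rewrite /Proj2 /D big_mkcond; apply: eq_bigr => i _.
by case: ifP; rewrite ?scale1r ?scale0r.
Qed.

End Units.

Section Lexpand.
Variable R : realType.
Local Notation C := R[i].

Lemma ccK (x : C) : x^*^* = x.
Proof. by case: x => a b /=; rewrite opprK. Qed.

Lemma Lexp n (B1 B2 rho : 'M[C]_n) p k k' :
  Lmap B1 B2 p k k' rho =
    ((omega k)^* * omega k') *: (B1 *m rho *m adj B1)
  + (omega k * (omega k')^*) *: (B2 *m rho *m adj B2)
  + ((1 - p)%:C * ((omega k)^* * (omega k')^*)) *: (B1 *m rho *m adj B2)
  + ((1 - p)%:C * (omega k * omega k')) *: (B2 *m rho *m adj B1).
Proof.
rewrite /Lmap /= !adjD !adjZ !conjCK !mulmxDl !mulmxDr.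
rewrite -!scalemxAl -!scalemxAr.
move: (B1 *m rho *m adj B1) (B2 *m rho *m adj B2) (B1 *m rho *m adj B2)
  (B2 *m rho *m adj B1) => X11 X22 X12 X21.
apply/matrixP => i j; rewrite !mxE.
rewrite !raddfB /= !rmorph1.
ring.
Qed.

End Lexpand.

Section Omega.
Variable R : realType.
Local Notation C := R[i].

Lemma conj_cpl (a b : R) : Num.conj (a +i* b) = a -i* b :> C.
Proof. by rewrite ?conjE. Qed.

Lemma omega_mul1 k nu : Num.conj (omega k) * omega (k + nu) = omega nu :> C.
Proof.
rewrite /omega conj_cpl; apply/eqP; rewrite eq_complex /= cosD sinD.
have h := cos2Dsin2 k.
apply/andP; split; apply/eqP.
- have -> : cos k * (cos k * cos nu - sin k * sin nu) - - sin k * (sin k * cos nu + cos k * sin nu)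
     = (cos k ^+ 2 + sin k ^+ 2) * cos nu by ring.
  by rewrite h mul1r.
- have -> : cos k * (sin k * cos nu + cos k * sin nu) + - sin k * (cos k * cos nu - sin k * sin nu)
     = (cos k ^+ 2 + sin k ^+ 2) * sin nu by ring.
  by rewrite h mul1r.
Qed.

Lemma omega_mul2 k nu : omega k * Num.conj (omega (k + nu)) = Num.conj (omega nu) :> C.
Proof.
by rewrite -(conjCK (omega k)) -rmorphM omega_mul1.
Qed.

Lemma omega_sub nu : Num.conj (omega nu) - omega nu = - 2%:R * 'i * (sin nu)%:C :> C.
Proof.
rewrite /omega conj_cpl; apply/eqP; rewrite eq_complex /=.
apply/andP; split; apply/eqP; ring.
Qed.

Lemma omega0 : omega 0 = 1 :> C.
Proof. by rewrite /omega cos0 sin0. Qed.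

End Omega.

Section Sums.
Variable R : realType.
Local Notation C := R[i].

Definition coef (l i : nat) : C :=
  if (i.+1 < l)%N then 1 else if i.+1 == l then - ((l - 1)%:R) else 0.

Lemma sum_split (n m : nat) (g : nat -> C) : (m <= n)%N ->
  \sum_(i < n) g i = \sum_(0 <= i < m) g i + \sum_(m <= i < n) g i.
Proof.
move=> mn; rewrite -(big_mkord xpredT g).
by rewrite (big_cat_nat (leq0n m) mn).
Qed.

Lemma coef_sum (n l : nat) (g : nat -> C) : (1 <= l <= n)%N ->
  \sum_(i < n) coef l i * g i = \sum_(0 <= i < l.-1) g i - (l - 1)%:R * g l.-1.
Proof.
case/andP=> l1 ln.
have h1 : (l.-1 <= n)%N by rewrite (leq_trans (leq_pred l)).
rewrite (sum_split (fun i => coef l i * g i) h1).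
have hl : (l.-1.+1 = l) by rewrite prednK.
rewrite (big_cat_nat (leqnSn l.-1)) /=; last by rewrite hl.
rewrite big_nat1 hl.
have -> : \sum_(l <= i < n) coef l i * g i = 0.
  rewrite big_nat_cond big1 // => i /andP[/andP[li _] _].
  rewrite /coef ltnNge (leq_trans li) // ifN ?mul0r //.
  by rewrite gtn_eqF.
rewrite addr0 /coef hl ltnn eqxx mulNr.
congr (_ - _).
apply: eq_big_nat => i /andP[_ il].
by rewrite -hl ltnS il mul1r.
Qed.

End Sums.


Section Main.
Variable R : realType.
Local Notation C := R[i].
Variables (n n1 : nat) (xi : 'I_n -> 'cV[C]_n) (U : 'M[C]_n) (p : R).
Hypothesis ortho : forall i j : 'I_n, adj (xi i) *m xi j = (i == j)%:R%:M.
Hypothesis HU1 : adj U *m U = 1%:M.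
Hypothesis HU2 : U *m adj U = 1%:M.
Hypothesis Hun : (Proj1 xi n1 *m U) *m adj (Proj1 xi n1 *m U)
    + (Proj2 xi n1 *m U) *m adj (Proj2 xi n1 *m U) = 1%:M.

Local Notation P1 := (Proj1 xi n1).
Local Notation P2 := (Proj2 xi n1).
Local Notation B1 := (P1 *m U).
Local Notation B2 := (P2 *m U).
Local Notation Dx := (D xi).

Definition f1 (i : 'I_n) : C := (i < n1)%N%:R.
Definition f2 (i : 'I_n) : C := (n1 <= i)%N%:R.

Lemma eq_D f g : f =1 g -> Dx f = Dx g.
Proof. by move=> fg; rewrite /D; apply: eq_bigr => i _; rewrite fg. Qed.

Lemma P1E : P1 = Dx f1. Proof. exact: Proj1D. Qed.
Lemma P2E : P2 = Dx f2. Proof. exact: Proj2D. Qed.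

Lemma adjP1 : adj P1 = P1.
Proof. by rewrite P1E adjDf //; apply: eq_D => i; rewrite /f1 -?conjE conjC_nat. Qed.
Lemma adjP2 : adj P2 = P2.
Proof. by rewrite P2E adjDf //; apply: eq_D => i; rewrite /f2 -?conjE conjC_nat. Qed.

Lemma P1P1 : P1 *m P1 = P1.
Proof. by rewrite P1E DD //; apply: eq_D => i; rewrite /f1; case: (i < n1)%N; rewrite ?mulr1 ?mulr0. Qed.
Lemma P2P2 : P2 *m P2 = P2.
Proof. by rewrite P2E DD //; apply: eq_D => i; rewrite /f2; case: (n1 <= i)%N; rewrite ?mulr1 ?mulr0. Qed.
Lemma P1P2 : P1 *m P2 = 0.
Proof.
rewrite P1E P2E DD // -(D0 xi); apply: eq_D => i; rewrite /f1 /f2.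
by case: ltnP; rewrite ?mulr0 ?mul0r.
Qed.
Lemma P2P1 : P2 *m P1 = 0.
Proof.
rewrite P1E P2E DD // -(D0 xi); apply: eq_D => i; rewrite /f1 /f2.
by case: ltnP; rewrite ?mulr0 ?mul0r.
Qed.

Lemma P1P2_1 : P1 + P2 = 1%:M.
Proof.
move: Hun; rewrite !adjM adjP1 adjP2 mulmxA -(mulmxA P1) HU2 mulmx1 P1P1.
by rewrite mulmxA -(mulmxA P2) HU2 mulmx1 P2P2.
Qed.

End Main.

Section Abs.
Variable R : realType.
Local Notation C := R[i].
Variables (n : nat) (P1 P2 U : 'M[C]_n) (p : R).
Hypothesis HU1 : adj U *m U = 1%:M.
Hypothesis HU2 : U *m adj U = 1%:M.
Hypotheses (adjP1 : adj P1 = P1) (adjP2 : adj P2 = P2).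
Hypotheses (P1P1 : P1 *m P1 = P1) (P2P2 : P2 *m P2 = P2).
Hypotheses (P1P2 : P1 *m P2 = 0) (P2P1 : P2 *m P1 = 0) (P1P2_1 : P1 + P2 = 1%:M).
Local Notation B1 := (P1 *m U).
Local Notation B2 := (P2 *m U).

Lemma BBadj1 : B1 *m adj B1 = P1.
Proof. by rewrite adjM adjP1 mulmxA -(mulmxA P1) HU2 mulmx1 P1P1. Qed.
Lemma BBadj2 : B2 *m adj B2 = P2.
Proof. by rewrite adjM adjP2 mulmxA -(mulmxA P2) HU2 mulmx1 P2P2. Qed.
Lemma BBadj12 : B1 *m adj B2 = 0.
Proof. by rewrite adjM adjP2 mulmxA -(mulmxA P1) HU2 mulmx1 P1P2. Qed.
Lemma BBadj21 : B2 *m adj B1 = 0.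
Proof. by rewrite adjM adjP1 mulmxA -(mulmxA P2) HU2 mulmx1 P2P1. Qed.

Lemma adjBB21 : adj B2 *m B1 = 0.
Proof. by rewrite adjM adjP2 -mulmxA (mulmxA P2) P2P1 mul0mx mulmx0. Qed.
Lemma adjBB12 : adj B1 *m B2 = 0.
Proof. by rewrite adjM adjP1 -mulmxA (mulmxA P1) P1P2 mul0mx mulmx0. Qed.
Lemma adjBBsum : adj B1 *m B1 + adj B2 *m B2 = 1%:M.
Proof.
rewrite !adjM adjP1 adjP2 -!mulmxA (mulmxA P1) (mulmxA P2) P1P1 P2P2.
by rewrite -mulmxDr -mulmxDl P1P2_1 mul1mx HU1.
Qed.

Lemma tr_cyc (X Y rho : 'M[C]_n) : \tr (X *m rho *m adj Y) = \tr (adj Y *m X *m rho).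
Proof. by rewrite mxtrace_mulC mulmxA. Qed.

Lemma tr4 (a b c d : C) (X Y Z W : 'M[C]_n) :
  \tr (a *: X + b *: Y + c *: Z + d *: W) = a * \tr X + b * \tr Y + c * \tr Z + d * \tr W.
Proof. by rewrite !mxtraceD !mxtraceZ. Qed.

Lemma trL k nu rho :
  \tr (Lmap B1 B2 p k (k + nu) rho)
  = omega nu * \tr rho - 2%:R * 'i * (sin nu)%:C * \tr (B2 *m rho *m adj B2).
Proof.
rewrite Lexp (omega_mul1 k nu) (omega_mul2 k nu) tr4.
rewrite (tr_cyc B1 B2 rho) (tr_cyc B2 B1 rho) adjBB21 adjBB12 (mul0mx _ rho).
rewrite mxtrace0 !mulr0 !addr0.
have hs : \tr (B1 *m rho *m adj B1) = \tr rho - \tr (B2 *m rho *m adj B2).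
  apply/eqP; rewrite eq_sym subr_eq; apply/eqP.
  by rewrite (tr_cyc B1 B1 rho) (tr_cyc B2 B2 rho) -mxtraceD -mulmxDl adjBBsum mul1mx.
rewrite hs; have := omega_sub nu.
move: (omega nu) (\tr rho) (\tr (B2 *m rho *m adj B2)) => w t T hw.
transitivity (w * t + (Num.conj w - w) * T); first by ring.
by rewrite hw; ring.
Qed.

End Abs.

Section Abs2.
Variable R : realType.
Local Notation C := R[i].
Variables (n : nat) (P1 P2 U : 'M[C]_n) (p : R).
Hypothesis HU1 : adj U *m U = 1%:M.
Hypothesis HU2 : U *m adj U = 1%:M.
Hypotheses (adjP1 : adj P1 = P1) (adjP2 : adj P2 = P2).
Hypotheses (P1P1 : P1 *m P1 = P1) (P2P2 : P2 *m P2 = P2).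
Hypotheses (P1P2 : P1 *m P2 = 0) (P2P1 : P2 *m P1 = 0).
Local Notation B1 := (P1 *m U).
Local Notation B2 := (P2 *m U).

Lemma Lscal k nu (c : C) :
  Lmap B1 B2 p k (k + nu) (c *: 1%:M)
  = c *: (omega nu *: P1 + Num.conj (omega nu) *: P2).
Proof.
have e : forall X Y : 'M[C]_n, X *m (c *: 1%:M) *m Y = c *: (X *m Y).
  by move=> X Y; rewrite scalemx1 mul_mx_scalar -scalemxAl.
rewrite Lexp !e (BBadj1 HU2 adjP1 P1P1) (BBadj2 HU2 adjP2 P2P2).
rewrite (BBadj12 HU2 adjP2 P1P2) (BBadj21 HU2 adjP1 P2P1).
rewrite (omega_mul1 k nu) (omega_mul2 k nu).
by apply/matrixP => i j; rewrite !mxE; ring.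
Qed.

Lemma trB2scal (c : C) : \tr (B2 *m (c *: 1%:M) *m adj B2) = c * \tr P2.
Proof.
by rewrite scalemx1 mul_mx_scalar -scalemxAl (BBadj2 HU2 adjP2 P2P2) mxtraceZ.
Qed.

End Abs2.

Lemma hs_g1 (R : realType) n (c : R) (X : 'M[R[i]]_n) :
  hs (c%:C *: 1%:M) X = c%:C * \tr X.
Proof.
rewrite /hs adjZ adj_scalar ?conjE ?conjc_real ?conjc1.
by rewrite -scalemxAl mul1mx mxtraceZ.
Qed.

Section Gam.
Variable R : realType.
Local Notation C := R[i].
Variables (n : nat) (xi : 'I_n -> 'cV[C]_n).
Hypothesis ortho : forall i j : 'I_n, adj (xi i) *m xi j = (i == j)%:R%:M.
Local Notation E := (Eunit xi).

Definition cl (l : nat) : R := (Num.sqrt ((l * (l - 1))%:R : R))^-1.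

Lemma gammadE l : gammad xi l = D xi (fun i => (cl l)%:C * coef R l i).
Proof.
by rewrite /gammad /D scaler_sumr; apply: eq_bigr => i _; rewrite scalerA.
Qed.

Lemma conj_coef l i : Num.conj (coef R l i) = coef R l i.
Proof.
rewrite /coef; case: ifP => _; first exact: conjC1.
by case: ifP => _; rewrite ?rmorphN ?rmorph_nat ?rmorph0.
Qed.

Lemma conj_realC (x : R) : Num.conj (x%:C) = x%:C.
Proof. by rewrite conjE conjc_real. Qed.

Lemma conjM (x y : C) : Num.conj (x * y) = Num.conj x * Num.conj y.
Proof. exact: rmorphM. Qed.

Lemma adj_gammad l : adj (gammad xi l) = gammad xi l.
Proof.
rewrite gammadE adjDf //; apply: eq_D => i.
by rewrite -?conjE conjM conj_realC conj_coef.
Qed.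

Lemma hs_gammad_D l f :
  hs (gammad xi l) (D xi f) = (cl l)%:C * \sum_(i < n) coef R l i * f i.
Proof.
rewrite /hs adj_gammad gammadE trDD // mulr_sumr.
by apply: eq_bigr => i _; rewrite mulrA.
Qed.

Lemma tr_gammad l : (2 <= l <= n)%N -> \tr (gammad xi l) = 0.
Proof.
move=> /andP[l2 ln].
rewrite gammadE trD // -mulr_sumr.
have h := coef_sum (n:=n) (l:=l) (fun _ : nat => (1 : C)).
rewrite /= in h.
have -> : \sum_(i < n) coef R l i = \sum_(i < n) coef R l i * 1.
  by apply: eq_bigr => i _; rewrite mulr1.
rewrite h; last by rewrite ln (leq_trans _ l2).
by rewrite sumr_const_nat subn0 mulr1 subn1 subrr mulr0.
Qed.

Lemma tr_gammao (a b : 'I_n) : a != b -> \tr (gammao xi a b) = 0.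
Proof.
move=> ab; have ba : b != a by rewrite eq_sym.
rewrite /gammao; case: ifP => _.
  by rewrite mxtraceZ mxtraceD !trE // (negbTE ab) (negbTE ba) addr0 mulr0.
by rewrite !mxtraceZ raddfB /= !trE // (negbTE ab) (negbTE ba) subr0 !mulr0.
Qed.

Lemma hs_gammao_D (a b : 'I_n) f : a != b -> hs (gammao xi a b) (D xi f) = 0.
Proof.
move=> ab; have ba : b != a by rewrite eq_sym.
rewrite /hs /gammao; case: ifP => _.
  rewrite adjZ adjD !adjEu -scalemxAl mulmxDl !ED // mxtraceZ mxtraceD.
  by rewrite !mxtraceZ !trE // (negbTE ab) (negbTE ba) !mulr0 addr0 mulr0.
rewrite !adjZ adjB !adjEu -!scalemxAl mulmxBl !ED // !mxtraceZ raddfB /=.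
by rewrite !mxtraceZ !trE // (negbTE ab) (negbTE ba) !mulr0 subr0 !mulr0.
Qed.

Lemma trP2 n1 : (n1 <= n)%N -> \tr (Proj2 xi n1) = (n - n1)%:R.
Proof.
move=> hn; rewrite Proj2D trD //.
rewrite (sum_split (fun i : nat => (n1 <= i)%N%:R : C) hn).
rewrite big_nat_cond big1 ?add0r; last first.
  by move=> i /andP[/andP[_ h] _]; rewrite leqNgt h.
rewrite (eq_big_nat _ _ (F2 := fun _ => 1)); last first.
  by move=> i /andP[-> _].
by rewrite sumr_const_nat.
Qed.

End Gam.

Section Fin.
Variable R : realType.
Local Notation C := R[i].
Variables (n n1 : nat) (xi : 'I_n -> 'cV[C]_n) (U : 'M[C]_n) (p : R).
Hypothesis ortho : forall i j : 'I_n, adj (xi i) *m xi j = (i == j)%:R%:M.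
Hypothesis HU1 : adj U *m U = 1%:M.
Hypothesis HU2 : U *m adj U = 1%:M.
Hypothesis Hun : (Proj1 xi n1 *m U) *m adj (Proj1 xi n1 *m U)
    + (Proj2 xi n1 *m U) *m adj (Proj2 xi n1 *m U) = 1%:M.
Hypothesis hn : (2 <= n)%N.
Hypothesis hn1 : (1 <= n1)%N.
Hypothesis hn1n : (n1 <= n - 1)%N.

Local Notation P1 := (Proj1 xi n1).
Local Notation P2 := (Proj2 xi n1).
Local Notation B1 := (P1 *m U).
Local Notation B2 := (P2 *m U).
Local Notation L := (Lmap B1 B2 p).

Let aP1 : adj P1 = P1. Proof. exact: adjP1. Qed.
Let aP2 : adj P2 = P2. Proof. exact: adjP2. Qed.
Let PP1 : P1 *m P1 = P1. Proof. exact: P1P1. Qed.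
Let PP2 : P2 *m P2 = P2. Proof. exact: P2P2. Qed.
Let PP12 : P1 *m P2 = 0. Proof. exact: P1P2. Qed.
Let PP21 : P2 *m P1 = 0. Proof. exact: P2P1. Qed.
Let PPs : P1 + P2 = 1%:M. Proof. exact: (P1P2_1 ortho HU2 Hun). Qed.

Definition sn : R := (Num.sqrt (n%:R : R))^-1.

Lemma trLF k nu rho : \tr (L k (k + nu) rho)
  = omega nu * \tr rho - 2%:R * 'i * (sin nu)%:C * \tr (B2 *m rho *m adj B2).
Proof. by apply: trL. Qed.

Lemma Lg1 k nu : L k (k + nu) (gamma1 R n)
  = D xi (fun i => sn%:C * (omega nu * f1 R n1 i + Num.conj (omega nu) * f2 R n1 i)).
Proof.
rewrite /gamma1 Lscal // P1E P2E !DZ DplusD DZ //.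
Qed.


Lemma omegaE (nu : R) : omega nu = (cos nu)%:C + 'i * (sin nu)%:C :> C.
Proof. by rewrite /omega; apply/eqP; rewrite eq_complex /=; apply/andP; split; apply/eqP; ring. Qed.

Lemma n_gt0 : (0 < n%:R :> R).
Proof. by rewrite ltr0n (leq_trans _ hn). Qed.

Lemma sqn_gt0 : 0 < Num.sqrt (n%:R : R).
Proof. by rewrite sqrtr_gt0 n_gt0. Qed.

Lemma sqn2 : Num.sqrt (n%:R : R) ^+ 2 = n%:R.
Proof. by rewrite sqr_sqrtr // ltW // n_gt0. Qed.

Lemma snC : sn%:C = ((Num.sqrt (n%:R : R))%:C)^-1 :> C.
Proof. by rewrite /sn fmorphV. Qed.

Lemma nC : (n%:R : C) = ((Num.sqrt (n%:R : R))%:C) ^+ 2.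
Proof. by rewrite -rmorphXn sqn2 rmorph_nat. Qed.

Lemma rC_neq0 : ((Num.sqrt (n%:R : R))%:C : C) != 0.
Proof.
apply/negP; rewrite eq_complex /= => /andP[/eqP h _].
by move: sqn_gt0; rewrite h ltxx.
Qed.

Lemma trg1 : \tr (gamma1 R n) = sn%:C * n%:R.
Proof. by rewrite /gamma1 mxtraceZ mxtrace1. Qed.

Lemma trB2g1 : \tr (B2 *m gamma1 R n *m adj B2) = sn%:C * (n - n1)%N%:R.
Proof.
rewrite /gamma1 trB2scal // trP2 //.
by rewrite (leq_trans hn1n) // leq_subr.
Qed.

Lemma C3a k nu : hs (gamma1 R n) (L k (k + nu) (gamma1 R n))
  = omega nu - 2%:R * 'i * (sin nu / Num.sqrt n%:R)%:C * \tr (B2 *m gamma1 R n *m adj B2).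
Proof.
rewrite {1}/gamma1 hs_g1 trLF trg1.
move: (\tr (B2 *m gamma1 R n *m adj B2)) => T.
rewrite (_ : (sin nu / Num.sqrt n%:R)%:C = (sin nu)%:C * sn%:C); last by rewrite -rmorphM.
rewrite snC nC.
have := rC_neq0; move: ((Num.sqrt (n%:R : R))%:C) => r r0.
by field.
Qed.

Lemma cM (x y : R) : (x * y)%:C = x%:C * y%:C :> C. Proof. exact: rmorphM. Qed.
Lemma cD (x y : R) : (x + y)%:C = x%:C + y%:C :> C. Proof. exact: rmorphD. Qed.
Lemma cB (x y : R) : (x - y)%:C = x%:C - y%:C :> C. Proof. exact: rmorphB. Qed.
Lemma cV (x : R) : (x^-1)%:C = (x%:C)^-1 :> C. Proof. exact: fmorphV. Qed.
Lemma cN (x : R) : (- x)%:C = - x%:C :> C. Proof. exact: rmorphN. Qed.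
Lemma cnat (m : nat) : ((m%:R : R)%:C) = m%:R :> C. Proof. exact: rmorph_nat. Qed.

Lemma C2a k nu : hs (gamma1 R n) (L k (k + nu) (gamma1 R n))
  = (2 * (n - n1)%N%:R * cos nu / n%:R)%:C + ((n1%:R - (n - n1)%N%:R) / n%:R)%:C * omega nu.
Proof.
have hn1n' : (n1 <= n)%N by rewrite (leq_trans hn1n) // leq_subr.
rewrite C3a trB2g1 !omegaE.
rewrite !natrB // !(cM, cD, cB, cN, cV, cnat) ?snC !nC.
have := rC_neq0; move: ((Num.sqrt (n%:R : R))%:C) => r r0.
by field.
Qed.

Definition gfun (nu : R) (i : nat) : C :=
  sn%:C * (omega nu * (i < n1)%N%:R + Num.conj (omega nu) * (n1 <= i)%N%:R).

Lemma gfun_lt nu i : (i < n1)%N -> gfun nu i = sn%:C * omega nu.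
Proof. by move=> h; rewrite /gfun h leqNgt h mulr1 mulr0 addr0. Qed.

Lemma gfun_ge nu i : (n1 <= i)%N -> gfun nu i = sn%:C * Num.conj (omega nu).
Proof. by move=> h; rewrite /gfun h ltnNge h mulr1 mulr0 add0r. Qed.

Lemma hs_gd_L k nu l : (1 <= l <= n)%N ->
  hs (gammad xi l) (L k (k + nu) (gamma1 R n))
  = (cl R l)%:C * (\sum_(0 <= i < l.-1) gfun nu i - (l - 1)%:R * gfun nu l.-1).
Proof.
move=> hl; rewrite Lg1 hs_gammad_D //.
have h := coef_sum (n:=n) (l:=l) (gfun nu).
by rewrite -h.
Qed.

Lemma C2b k nu l : (2 <= l <= n1)%N ->
  hs (gammad xi l) (L k (k + nu) (gamma1 R n)) = 0.
Proof.
case/andP => l2 ln1.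
have hln : (1 <= l <= n)%N by lia.
have hl1 : (l.-1 < n1)%N by lia.
rewrite (hs_gd_L k nu hln) (gfun_lt _ hl1).
rewrite (eq_big_nat _ _ (F2 := fun _ => sn%:C * omega nu)); last first.
  by move=> i /andP[_ h]; rewrite gfun_lt // (leq_trans h) // ltnW.
rewrite sumr_const_nat subn0 subn1; ring.
Qed.

Lemma sq_prod l : (Num.sqrt (n%:R * (l - 1)%:R * l%:R))^-1 = cl R l * sn.
Proof.
rewrite /cl /sn -invfM; congr (_^-1).
rewrite natrM -sqrtrM; last by rewrite mulr_ge0 ?ler0n.
by congr Num.sqrt; ring.
Qed.

Lemma C2c k nu l : (n1 + 1 <= l <= n)%N ->
  hs (gammad xi l) (L k (k + nu) (gamma1 R n))
  = (2 * n1%:R * sin nu / Num.sqrt (n%:R * (l - 1)%:R * l%:R))%:C * 'i.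
Proof.
case/andP => l1 ln.
have hln : (1 <= l <= n)%N by lia.
have hl1 : (n1 <= l.-1)%N by lia.
rewrite sq_prod (hs_gd_L k nu hln) (gfun_ge _ hl1).
rewrite (big_cat_nat (leq0n n1) hl1) /=.
rewrite (@eq_big_nat _ _ _ 0 n1 (gfun nu) (fun _ => sn%:C * omega nu)); last first.
  by move=> i /andP[_ h]; rewrite gfun_lt.
rewrite (@eq_big_nat _ _ _ n1 l.-1 (gfun nu) (fun _ => sn%:C * Num.conj (omega nu))); last first.
  by move=> i /andP[h _]; rewrite gfun_ge.
rewrite !sumr_const_nat subn0 subn1 -[_ *+ (l.-1 - n1)]mulr_natr natrB //.
rewrite !cM !cnat.
have hw := omega_sub nu.
have -> : Num.conj (omega nu) = omega nu + (Num.conj (omega nu) - omega nu) by ring.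
rewrite hw; ring.
Qed.

Lemma sinsnC nu : (sin nu / Num.sqrt n%:R)%:C = (sin nu)%:C * sn%:C :> C.
Proof. by rewrite -cM. Qed.

Lemma C3b k nu l : (2 <= l <= n)%N ->
  hs (gamma1 R n) (L k (k + nu) (gammad xi l))
  = - 2%:R * 'i * (sin nu / Num.sqrt n%:R)%:C * \tr (B2 *m gammad xi l *m adj B2).
Proof.
move=> hl; rewrite {1}/gamma1 hs_g1 trLF tr_gammad // sinsnC.
by move: (\tr (B2 *m gammad xi l *m adj B2)) => T; ring.
Qed.

Lemma C3c k nu (a b : 'I_n) : a != b ->
  hs (gamma1 R n) (L k (k + nu) (gammao xi a b))
  = - 2%:R * 'i * (sin nu / Num.sqrt n%:R)%:C * \tr (B2 *m gammao xi a b *m adj B2).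
Proof.
move=> ab; rewrite {1}/gamma1 hs_g1 trLF tr_gammao // sinsnC.
by move: (\tr (B2 *m gammao xi a b *m adj B2)) => T; ring.
Qed.

Lemma C1 k nu (a b : 'I_n) : a != b ->
  hs (gammao xi a b) (L k (k + nu) (gamma1 R n)) = 0.
Proof. by move=> ab; rewrite Lg1 hs_gammao_D. Qed.

Lemma Lkk k : L k k = L k (k + 0).
Proof. by rewrite addr0. Qed.

Lemma Z1 k : hs (gamma1 R n) (L k k (gamma1 R n)) = 1.
Proof.
rewrite Lkk C3a omega0 sin0 mul0r.
by rewrite (_ : (0 : R)%:C = 0) // mulr0 mul0r subr0.
Qed.

Lemma Z2 k l : (2 <= l <= n)%N ->
  hs (gammad xi l) (L k k (gamma1 R n)) = 0 /\ hs (gamma1 R n) (L k k (gammad xi l)) = 0.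
Proof.
move=> hl; rewrite !Lkk; split.
  case: (leqP l n1) => h.
    by apply: C2b; case/andP: hl => -> _.
  rewrite C2c; last by case/andP: hl => _ ->; rewrite addn1 h.
  by rewrite sin0 mulr0 mul0r (_ : (0 : R)%:C = 0) // mul0r.
rewrite C3b // sin0 mul0r.
by rewrite (_ : (0 : R)%:C = 0) // mulr0 mul0r.
Qed.

Lemma Z3 k (a b : 'I_n) : a != b ->
  hs (gammao xi a b) (L k k (gamma1 R n)) = 0 /\ hs (gamma1 R n) (L k k (gammao xi a b)) = 0.
Proof.
move=> ab; rewrite !Lkk; split; first exact: C1.
rewrite C3c // sin0 mul0r.
by rewrite (_ : (0 : R)%:C = 0) // mulr0 mul0r.
Qed.

End Fin.

Unset Implicit Arguments.

Theorem mainTheorem1 (R : realType) (n n1 : nat) (xi : 'I_n -> 'cV[R[i]]_n)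
  (U : 'M[R[i]]_n) (p : R) :
  (2 <= n)%N -> (1 <= n1)%N -> (n1 <= n - 1)%N ->
  (forall i j : 'I_n, adj (xi i) *m xi j = (i == j)%:R%:M) ->
  adj U *m U = 1%:M -> U *m adj U = 1%:M ->
  (Proj1 xi n1 *m U) *m adj (Proj1 xi n1 *m U)
    + (Proj2 xi n1 *m U) *m adj (Proj2 xi n1 *m U) = 1%:M ->
  0 <= p <= 1 ->
  let n2 := (n - n1)%N in
  let B1 := Proj1 xi n1 *m U in
  let B2 := Proj2 xi n1 *m U in
  let L := Lmap B1 B2 p in
  let g1 := gamma1 R n in
  forall k nu : R,
  (* (1) *)
  (forall a b : 'I_n, a != b -> hs (gammao xi a b) (L k (k + nu) g1) = 0)
  (* (2) *)
  /\ hs g1 (L k (k + nu) g1)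
       = (2 * n2%:R * cos nu / n%:R)%:C + ((n1%:R - n2%:R) / n%:R)%:C * omega nu
  /\ (forall l : nat, (2 <= l <= n1)%N -> hs (gammad xi l) (L k (k + nu) g1) = 0)
  /\ (forall l : nat, (n1 + 1 <= l <= n)%N ->
        hs (gammad xi l) (L k (k + nu) g1)
          = (2 * n1%:R * sin nu / Num.sqrt (n%:R * (l - 1)%:R * l%:R))%:C * 'i)
  (* (3) *)
  /\ hs g1 (L k (k + nu) g1)
       = omega nu - 2%:R * 'i * (sin nu / Num.sqrt n%:R)%:C * \tr (B2 *m g1 *m adj B2)
  /\ (forall l : nat, (2 <= l <= n)%N ->
        hs g1 (L k (k + nu) (gammad xi l))
          = - 2%:R * 'i * (sin nu / Num.sqrt n%:R)%:C
              * \tr (B2 *m gammad xi l *m adj B2))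
  /\ (forall a b : 'I_n, a != b ->
        hs g1 (L k (k + nu) (gammao xi a b))
          = - 2%:R * 'i * (sin nu / Num.sqrt n%:R)%:C
              * \tr (B2 *m gammao xi a b *m adj B2))
  (* in particular, for nu = 0: first row and first column of the matrix of L_{k,k} *)
  /\ hs g1 (L k k g1) = 1
  /\ (forall l : nat, (2 <= l <= n)%N ->
        hs (gammad xi l) (L k k g1) = 0 /\ hs g1 (L k k (gammad xi l)) = 0)
  /\ (forall a b : 'I_n, a != b ->
        hs (gammao xi a b) (L k k g1) = 0 /\ hs g1 (L k k (gammao xi a b)) = 0).

Proof.
move=> hn hn1 hn1n ortho HU1 HU2 Hun hp n2 B1 B2 L g1 k nu.
split; first by move=> a b ab; apply: C1.
split; first by apply: C2a.
split; first by move=> l hl; apply: C2b.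
split; first by move=> l hl; apply: C2c.
split; first by apply: C3a.
split; first by move=> l hl; apply: C3b.
split; first by move=> a b ab; apply: C3c.
split; first by apply: Z1.
split; first by move=> l hl; apply: Z2.
by move=> a b ab; apply: Z3.
Qed.
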